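(* Let $(A,n_1,\ldots,n_r)$ be an excessively clusterizable A-configuration. Then there exist nonnegative integers $m_1,\ldots,m_r$ such that $m_i=0$ whenever $n_i=0$, $m_1+\cdots+m_r=|A|$, and $(A,m_1,\ldots,m_r)$ is a simply excessively clusterizable A-configuration.
   Context: Setting: $\Phi$ a simply laced root system of rank $r$ with positive roots $\Phi^+$, simple roots $\alpha_1,\ldots,\alpha_r$, scalar product normalized so $(\alpha,\alpha)=2$. $\mathrm{supp}\,v$ for $v=\sum a_j\alpha_j$ is $\{\alpha_j:a_j\ne0\}$. For $A\subseteq\Phi^+$ and $I\subseteq\{1,\ldots,r\}$, $R_I(A)$ is the set of $\alpha\in A$ whose support contains some $\alpha_j$, $j\in I$. An A-configuration is $(A,n_1,\ldots,n_r)$ with $A\subseteq\Phi^+$, $n_j\in\mathbb Z_{\ge0}$, $\sum n_j=|A|$. A set $A\subseteq\Phi^+$ is an $I$-cluster if: (1) coefficients of $\alpha_j$, $j\in I$, in elements of $A$ are $\le1$; (2) $(\alpha,\beta)\ne-1$ for distinct $\alpha,\beta\in A$; (3) if $\alpha,\beta\in A$, $(\alpha,\beta)=0$, then $\mathrm{supp}\,\alpha\cap\mathrm{supp}\,\beta$ contains no $\alpha_j$ with $j\in I$. With $I=\{j:n_j>0\}$, $(A,n)$ is excessive if $|R_I(A)|=\sum n_j$ and $|R_J(A)|>\sum_{j\in J}n_j$ for all nonempty $J\subsetneq I$; it is an excessive cluster if moreover $A$ is an $I$-cluster; it is a simple excessive cluster if it is an excessive cluster and $|I|=1$. Excessively clusterizable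 (recursively on $|A|$): $(\varnothing,0,\ldots,0)$ is; for $|A|>0$, $(A,n)$ is if there is nonempty $I$ with $n_j>0$ for $j\in I$ such that, with $k_j=n_j$ ($j\in I$), $k_j=0$ otherwise, $|R_I(A)|=\sum k_j$, $(R_I(A),k)$ is an excessive cluster and $(A\setminus R_I(A),n-k)$ is excessively clusterizable. Simply excessively clusterizable (recursively on $|A|$): $(\varnothing,0,\ldots,0)$ is; for $|A|>0$, $(A,n)$ is if there is an index $i$ with $n_i>0$ such that, with $k_i=n_i$ and $k_j=0$ for $j\ne i$, $|R_{\{i\}}(A)|=n_i$, $(R_{\{i\}}(A),k)$ is a simple excessive cluster, and $(A\setminus R_{\{i\}}(A),n-k)$ is simply excessively clusterizable. *)

(* Defs.v *)
From HB Require Import structures.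
From mathcomp Require Import all_boot all_order all_algebra.
Set Implicit Arguments. Unset Strict Implicit. Unset Printing Implicit Defensive.
Import GRing.Theory Num.Theory.
Local Open Scope ring_scope.

(* Elements of the root lattice, written in the basis of simple roots:
   v = sum_j v j * alpha_j. *)
Definition vec (r : nat) := {ffun 'I_r -> int}.

Definition sprod (r : nat) (C : 'I_r -> 'I_r -> int) (v w : vec r) : int :=
  \sum_(i < r) \sum_(j < r) v i * C i j * w j.

Definition simply_laced_cartan (r : nat) (C : 'I_r -> 'I_r -> int) : Prop :=
  [/\ (forall i j, C i j = C j i),
      (forall i, C i i = 2),
      (forall i j, i != j -> C i j = 0 \/ C i j = -1)
    & (forall v : vec r, (exists i, v i != 0) -> 0 < sprod C v v)].

Definition simple_root (r : nat) (i : 'I_r) : vec r :=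
  [ffun j => if i == j then 1 else 0].

Definition sreflect (r : nat) (C : 'I_r -> 'I_r -> int) (i : 'I_r) (v : vec r) : vec r :=
  [ffun j => v j - sprod C v (simple_root i) * simple_root i j].

(* Roots: the Weyl group orbit of the simple roots. *)
Definition is_root (r : nat) (C : 'I_r -> 'I_r -> int) (v : vec r) : Prop :=
  exists (s : seq 'I_r) (j : 'I_r), v = foldr (sreflect C) (simple_root j) s.

Definition is_pos_root (r : nat) (C : 'I_r -> 'I_r -> int) (v : vec r) : Prop :=
  is_root C v /\ (forall j, 0 <= v j).

Definition meetsI (r : nat) (I : {set 'I_r}) (a : vec r) : bool :=
  [exists j in I, a j != 0].

Definition R_I (r : nat) (I : {set 'I_r}) (A : seq (vec r)) : seq (vec r) :=
  filter (meetsI I) A.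

Definition supp_n (r : nat) (n : 'I_r -> nat) : {set 'I_r} :=
  [set j | (0 < n j)%N].

Definition is_cluster (r : nat) (C : 'I_r -> 'I_r -> int) (I : {set 'I_r})
    (A : seq (vec r)) : Prop :=
  [/\ (forall a j, a \in A -> j \in I -> a j <= 1),
      (forall a b, a \in A -> b \in A -> a != b -> sprod C a b != -1)
    & (forall a b, a \in A -> b \in A -> sprod C a b = 0 ->
         forall j, j \in I -> ~~ ((a j != 0) && (b j != 0)))].

Definition excessive (r : nat) (A : seq (vec r)) (n : 'I_r -> nat) : Prop :=
  size (R_I (supp_n n) A) = (\sum_(j < r) n j)%N /\
  (forall J : {set 'I_r}, J != set0 -> J \proper supp_n n ->
     (\sum_(j in J) n j < size (R_I J A))%N).

Definition excessive_cluster (r : nat) (C : 'I_r -> 'I_r -> int)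
    (A : seq (vec r)) (n : 'I_r -> nat) : Prop :=
  excessive A n /\ is_cluster C (supp_n n) A.

Definition simple_excessive_cluster (r : nat) (C : 'I_r -> 'I_r -> int)
    (A : seq (vec r)) (n : 'I_r -> nat) : Prop :=
  excessive_cluster C A n /\ #|supp_n n| = 1%N.

Definition restr (r : nat) (I : {set 'I_r}) (n : 'I_r -> nat) : 'I_r -> nat :=
  fun j => if j \in I then n j else 0%N.

Inductive exc_clusterizable (r : nat) (C : 'I_r -> 'I_r -> int) :
    seq (vec r) -> ('I_r -> nat) -> Prop :=
| ExcNil (n : 'I_r -> nat) : (forall j, n j = 0%N) -> exc_clusterizable C [::] n
| ExcStep (A : seq (vec r)) (n : 'I_r -> nat) (I : {set 'I_r}) :
    (0 < size A)%N -> I != set0 -> (forall j, j \in I -> 0 < n j)%N ->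
    size (R_I I A) = (\sum_(j < r) restr I n j)%N ->
    excessive_cluster C (R_I I A) (restr I n) ->
    exc_clusterizable C [seq a <- A | ~~ meetsI I a] (fun j => n j - restr I n j)%N ->
    exc_clusterizable C A n.

Inductive simply_exc_clusterizable (r : nat) (C : 'I_r -> 'I_r -> int) :
    seq (vec r) -> ('I_r -> nat) -> Prop :=
| SExcNil (n : 'I_r -> nat) : (forall j, n j = 0%N) -> simply_exc_clusterizable C [::] n
| SExcStep (A : seq (vec r)) (n : 'I_r -> nat) (i : 'I_r) :
    (0 < size A)%N -> (0 < n i)%N ->
    size (R_I [set i] A) = n i ->
    simple_excessive_cluster C (R_I [set i] A) (restr [set i] n) ->
    simply_exc_clusterizable C [seq a <- A | ~~ meetsI [set i] a]
      (fun j => n j - restr [set i] n j)%N ->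
    simply_exc_clusterizable C A n.

(* Main.v *)
Require Import Defs.
From HB Require Import structures.
From mathcomp Require Import all_boot all_order all_algebra.
From Stdlib Require Import FunctionalExtensionality.
Import GRing.Theory Num.Theory.

Lemma meetsI1 r (j : 'I_r) (a : vec r) : meetsI [set j] a = (a j != 0%R).
Proof.
apply/existsP/idP => [[x /andP[/set1P -> //]]| h].
by exists j; rewrite set11 h.
Qed.

Lemma has_enum r (I : {set 'I_r}) (a : vec r) :
  has (fun x => a x != 0%R) (enum I) = meetsI I a.
Proof.
apply/hasP/existsP => [[x xI ax]|[x /andP[xI ax]]]; exists x.
  by rewrite -mem_enum xI.
by rewrite mem_enum.
by [].
Qed.

Lemma sexc_sum r C A m : @simply_exc_clusterizable r C A m ->
  (\sum_(j < r) m j)%N = size A.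
Proof.
elim=> {A m} [n n0 | A n i _ _ Hsz _ _ IH].
  by rewrite big1.
have E : (\sum_(j < r) (n j - restr [set i] n j))%N = (\sum_(j < r | j != i) n j)%N.
  rewrite (bigD1 i) //= /restr inE eqxx subnn add0n.
  by apply eq_bigr => j /negbTE ji; rewrite inE ji subn0.
rewrite E in IH.
rewrite -(count_predC (meetsI [set i]) A) -!size_filter.
by rewrite (bigD1 i) //= -Hsz -IH.
Qed.

Lemma sexc_supp r C A m j : @simply_exc_clusterizable r C A m ->
  (0 < m j)%N -> exists2 a, a \in A & a j != 0%R.
Proof.
elim=> {A m} [n n0 | A n i _ ni Hsz _ _ IH].
  by rewrite n0.
case: (eqVneq i j) => [<- _| ij].
  have [a ha] : exists a, a \in R_I [set i] A.
    move: Hsz ni; case: (R_I [set i] A) => [|a l] /=; first by move=> <-.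
    by move=> _ _; exists a; rewrite mem_head.
  by move: ha; rewrite mem_filter meetsI1 => /andP[ai aA]; exists a.
move=> h; have [|a] := IH; first by rewrite /restr inE eq_sym (negbTE ij) subn0.
by rewrite mem_filter => /andP[_ aA] aj; exists a.
Qed.

Lemma L r (C : 'I_r -> 'I_r -> int) (I : {set 'I_r}) (X : seq (vec r)) :
  is_cluster C I X -> forall s : seq 'I_r, {subset s <= I} ->
  forall (A : seq (vec r)) (m' : 'I_r -> nat),
  (forall a : vec r, a \in A -> has (fun x => a x != 0%R) s -> a \in X) ->
  simply_exc_clusterizable C [seq a : vec r <- A | ~~ has (fun x => a x != 0%R) s] m' ->
  exists m, (forall i, i \notin s -> m i = m' i) /\ simply_exc_clusterizable C A m.
Proof.
move=> HX; elim=> [|j s IH] sI A m' HA HS.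
  exists m'; split=> //.
  by rewrite (@eq_filter _ _ predT) ?filter_predT in HS.
set A1 := [seq a <- A | ~~ meetsI [set j] a].
have HA1 : forall a : vec r, a \in A1 -> has (fun x => a x != 0%R) s -> a \in X.
  by move=> a; rewrite mem_filter => /andP[_ aA] h; apply HA => //=; rewrite h orbT.
have HS1 : simply_exc_clusterizable C
    [seq a : vec r <- A1 | ~~ has (fun x => a x != 0%R) s] m'.
  have -> : [seq a : vec r <- A1 | ~~ has (fun x => a x != 0%R) s] =
            [seq a : vec r <- A | ~~ has (fun x => a x != 0%R) (j :: s)] => //.
  by rewrite /A1 -filter_predI; apply eq_filter => a /=; rewrite meetsI1 negb_or andbC.
have sI' : {subset s <= I} by move=> x xs; apply sI; rewrite inE xs orbT.
have [m1 [Hm1 HS1']] := IH sI' A1 m' HA1 HS1.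
have m1j : m1 j = 0%N.
  case: (posnP (m1 j)) => // h.
  have [a aA1 aj] := @sexc_supp _ _ _ _ j HS1' h.
  by move: aA1; rewrite mem_filter meetsI1 aj.
have jI : j \in I by apply sI; rewrite mem_head.
case E: (R_I [set j] A) => [|b B].
  have A1A : A1 = A.
    rewrite /A1; apply/all_filterP; apply/allP => a aA; apply/negP => h.
    have : a \in R_I [set j] A by rewrite mem_filter h aA.
    by rewrite E.
  exists m1; split; last by rewrite -A1A.
  by move=> i; rewrite inE negb_or => /andP[_]; exact: Hm1.
pose m := fun i => if i == j then size (R_I [set j] A) else m1 i.
exists m; split.
  by move=> i; rewrite inE negb_or => /andP[/negbTE ij]; rewrite /m ij; exact: Hm1.
have mj : (0 < m j)%N by rewrite /m eqxx E.
have inX : forall a : vec r, a \in R_I [set j] A -> a \in X.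
  move=> a; rewrite mem_filter meetsI1 => /andP[aj aA]; apply HA => //=.
  by rewrite aj.
have Hsupp : supp_n (restr [set j] m) = [set j].
  apply/setP => i; rewrite !inE /restr inE.
  by case: (eqVneq i j) => [->|]; rewrite ?mj.
apply SExcStep with j.
- have : b \in R_I [set j] A by rewrite E mem_head.
  rewrite mem_filter => /andP[_ bA].
  by rewrite lt0n size_eq0; apply/eqP => A0; rewrite A0 in bA.
- exact mj.
- by rewrite /m eqxx.
- split; last by rewrite Hsupp cards1.
  split; last first.
    rewrite Hsupp; case: HX => H1 H2 H3; split.
    + by move=> a i aR /set1P ->; apply H1 => //; exact: inX.
    + by move=> a b' aR bR; apply H2; exact: inX.
    + by move=> a b' aR bR h i /set1P ->; apply H3 => //; exact: inX.
  split.
    rewrite Hsupp /R_I filter_id (bigD1 j) //= big1 ?addn0.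
      by rewrite /restr inE eqxx /m eqxx.
    by move=> i /negbTE ij; rewrite /restr inE ij.
  move=> J J0; rewrite Hsupp => /properP [Jsub [x /set1P -> xJ]].
  case/set0Pn: J0 => y yJ.
  have := subsetP Jsub y yJ; move/set1P => yj.
  by rewrite -yj yJ in xJ.
- have -> : (fun i => m i - restr [set j] m i)%N = m1 => //.
  apply functional_extensionality => i; rewrite /restr inE /m.
  case: (eqVneq i j) => [->|/negbTE ij]; rewrite ?eqxx ?ij ?subnn ?subn0 //.
Qed.

Lemma main_aux r C A n : @exc_clusterizable r C A n ->
  exists m, (forall i, n i = 0%N -> m i = 0%N) /\ simply_exc_clusterizable C A m.
Proof.
elim=> {A n} [n n0 | A n I _ _ Ipos _ [_ Hcl] _ [m' [Hm' HS']]].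
  by exists n; split => //; exact: SExcNil.
have Hsupp : supp_n (restr I n) = I.
  apply/setP => i; rewrite inE /restr.
  by case: (boolP (i \in I)) => iI; rewrite ?Ipos.
rewrite Hsupp in Hcl.
have HA : forall a : vec r, a \in A -> has (fun x => a x != 0%R) (enum I) -> a \in R_I I A.
  by move=> a aA; rewrite has_enum => h; rewrite mem_filter h aA.
have HS : simply_exc_clusterizable C
   [seq a : vec r <- A | ~~ has (fun x => a x != 0%R) (enum I)] m'.
  by rewrite (@eq_filter _ _ (fun a => ~~ meetsI I a)) // => a; rewrite has_enum.
have sE : {subset enum I <= I} by move=> x; rewrite mem_enum.
have [m [Hm HS2]] := @L r C I (R_I I A) Hcl (enum I) sE A m' HA HS.
exists m; split => // i ni0.
have iI : i \notin I by apply/negP => iI; have := Ipos i iI; rewrite ni0.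
rewrite Hm ?mem_enum //; apply Hm'.
by rewrite /restr (negbTE iI) ni0.
Qed.

Theorem mainTheorem11 (r : nat) (C : 'I_r -> 'I_r -> int)
    (A : seq (vec r)) (n : 'I_r -> nat) :
  simply_laced_cartan C ->
  uniq A -> (forall a, a \in A -> is_pos_root C a) ->
  (\sum_(j < r) n j)%N = size A ->
  exc_clusterizable C A n ->
  exists m : 'I_r -> nat,
    [/\ (forall i, n i = 0%N -> m i = 0%N),
        (\sum_(j < r) m j)%N = size A
      & simply_exc_clusterizable C A m].
Proof.
move=> _ _ _ _ H; have [m [H1 H2]] := main_aux _ _ _ _ H.
by exists m; split => //; exact: (sexc_sum _ _ _ _ H2).
Qed.
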